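(* Let $X$ be a set strongly star Hurewicz space and $Y$ a compact space such that $X\times Y$ is $T_1$ and $|X\times Y|<\mathfrak b$. Then $X\times Y$ is set strongly star Hurewicz.
   Context: For a family $\mathcal U$ of subsets of $Z$ and $A\subseteq Z$, $st(A,\mathcal U)=\bigcup\{U\in\mathcal U: U\cap A\neq\emptyset\}$. $Z$ is set strongly star Hurewicz if for every nonempty $A\subseteq Z$ and every sequence $(\mathcal U_n:n\in\omega)$ of families of open subsets of $Z$ with $\overline A\subseteq\bigcup\mathcal U_n$ for all $n$, there are finite $F_n\subseteq\overline A$ such that each $x\in A$ lies in $st(F_n,\mathcal U_n)$ for all but finitely many $n$. $\mathfrak b$ is the minimal cardinality of a $\leq^*$-unbounded subset of $\omega^\omega$. *)

(* Defs.v *)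
From HB Require Import structures.
From mathcomp Require Import all_boot all_order all_algebra.
From mathcomp Require Import all_classical all_reals all_analysis.
Set Implicit Arguments. Unset Strict Implicit. Unset Printing Implicit Defensive.
Local Open Scope classical_set_scope.

Definition star (Z : Type) (A : set Z) (U : set (set Z)) : set Z :=
  [set z | exists2 V, U V & (V z /\ V `&` A !=set0)].

Definition set_strongly_star_hurewicz (Z : topologicalType) : Prop :=
  forall (A : set Z), A !=set0 ->
  forall (U : nat -> set (set Z)),
    (forall n, U n `<=` open) ->
    (forall n, closure A `<=` \bigcup_(V in U n) V) ->
    exists F : nat -> set Z,
      (forall n, finite_set (F n) /\ F n `<=` closure A) /\
      (forall x, A x -> exists N, forall n, (N <= n)%N -> star (F n) (U n) x).

Definition leq_star (f g : nat -> nat) : Prop :=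
  exists N, forall n, (N <= n)%N -> (f n <= g n)%N.

Definition unbounded_family (B : set (nat -> nat)) : Prop :=
  ~ (exists g, forall f, B f -> leq_star f g).

(* |A| < b : no <=*-unbounded subset of omega^omega has cardinality <= |A|
   (b being the minimal cardinality of such a set) *)
Definition card_lt_b (T : Type) (A : set T) : Prop :=
  forall B : set (nat -> nat), unbounded_family B -> ~ (card_le B A).

(* Main.v *)
From HB Require Import structures.
Require Import Defs.
From mathcomp Require Import all_boot all_order all_algebra.
From mathcomp Require Import all_classical all_reals all_analysis.
Local Open Scope classical_set_scope.

Lemma tube (X Y : topologicalType) (x : X) (P : X -> Y -> Prop) :
  compact [set: Y] -> (forall y, nbhs ((x, y) : (X * Y)%type) (fun p => P p.1 p.2)) ->
  \forall i \near x, forall y, P i y.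
Proof.
move=> /compact_near_coveringP cY h.
have := cY X (nbhs x) P _ .
have H : forall y, [set: Y] y -> \forall y' \near y & i \near x, P i y'.
  move=> y _. have := h y. move=> [[A B] [/= hA hB] hAB].
  exists (B, A) => //= [[y' i]] [/= By Ai]. exact: (hAB (i, y')).
move=> /(_ _ H); apply: filterS => i Hi y; exact: Hi.
Qed.

Lemma cc (Y : topologicalType) (y0 : Y) : compact [set: Y] -> cover_compact [set: Y].
Proof.
pose Yp : ptopologicalType := HB.pack Y (isPointed.Build Y y0).
move=> cY.
have := @compact_cover Yp. move=> e. have : @compact Yp [set: Yp] by exact: cY.
rewrite e. exact.
Qed.

Lemma fiber_finite (X Y : topologicalType) (x : X) (S : set (X * Y)) :
  compact [set: Y] ->
  (forall y, exists N, nbhs ((x, y) : (X * Y)%type) N /\ forall s, S s -> N s -> s = (x, y)) ->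
  finite_set [set y | S (x, y)].
Proof.
move=> cY h.
have [[y0 _]|h0] := pselect (exists y0, S (x, y0)); last first.
  have -> : [set y | S (x, y)] = set0.
    by apply/seteqP; split => y //= Sy; apply: h0; exists y.
  exact: finite_set0.
have h' : forall y, exists B : set Y, [/\ open B, B y & forall y', B y' -> S (x, y') -> y' = y].
  move=> y; have [N [[[A B] [/= hA hB] hAB] hN]] := h y.
  move: hB; rewrite nbhsE; move=> -[B' [oB' B'y] B'B].
  exists B'; split => // y' /B'B By' Sy'.
  have := hN _ Sy' (hAB (x, y') (conj (nbhs_singleton hA) By')).
  by case.
have [f hf] := choice h'.
have {}cY := @cc Y y0 cY.
have [D' _ cov] : finite_subset_cover [set: Y] f [set: Y].
  apply: cY; first by move=> i _; case: (hf i).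
  by move=> y _; exists y => //; case: (hf y).
apply: (sub_finite_set _ (finite_fset D')) => y' Sy'.
have [y Dy fy'] := cov y' I.
by case: (hf y) => _ _ /(_ _ fy' Sy') ->.
Qed.

Lemma step1 (X Y : topologicalType) (A : set (X * Y)) (U0 : set (set (X * Y))) :
  set_strongly_star_hurewicz X -> compact [set: Y] -> accessible_space (X * Y)%type ->
  U0 `<=` open -> closure A `<=` \bigcup_(V in U0) V ->
  exists G : nat -> set (X * Y), (forall k, finite_set (G k) /\ G k `<=` closure A) /\
    forall z, closure A z -> exists k, star (G k) U0 z.
Proof.
move=> sX cY T1 Uo UC.
set C := closure A.
pose sep (S : set (X * Y)) := forall V, U0 V -> forall p q, S p -> S q -> V p -> V q -> p = q.
have [|S [[SC sepS] maxS]] := @Zorn_bigcup _ [set S | S `<=` C /\ sep S].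
  move=> F FP tot; split.
    by move=> p [S0 FS0 S0p]; exact: (FP _ FS0).1 _ S0p.
  move=> V UV p q [S1 F1 p1] [S2 F2 q2] Vp Vq.
  have [s12|s21] := tot _ _ F1 F2.
    exact: (FP _ F2).2 V UV p q (s12 _ p1) q2 Vp Vq.
  exact: (FP _ F1).2 V UV p q p1 (s21 _ q2) Vp Vq.
have covS : forall w, C w -> star S U0 w.
  move=> w Cw; apply: contrapT => nw.
  have [Sw|nSw] := pselect (S w).
    by have [V UV Vw] := UC w Cw; apply: nw; exists V => //; split => //; exists w.
  have hmax := maxS (S `|` [set w]); apply: hmax.
    split; first by move=> p Sp; left.
    by move=> /(_ w (or_intror erefl)).
  split.
    by move=> p [/SC|->].
  move=> V UV p q [Sp|->] [Sq|->] Vp Vq //.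
  - exact: sepS V UV p q Sp Sq Vp Vq.
  - by exfalso; apply: nw; exists V => //; split => //; exists p.
  - by exfalso; apply: nw; exists V => //; split => //; exists q.
have nb : forall p, exists N, [/\ open N, N p & forall s, S s -> N s -> s = p].
  move=> p; have [Cp|nCp] := pselect (C p).
    have [V UV Vp] := UC p Cp.
    have [[s [Ss Vs sp]]|no] := pselect (exists s, [/\ S s, V s & s <> p]).
      exists (V `&` ~` [set s]); split.
      - apply: openI; first exact: Uo.
        exact/closed_openC/accessible_closed_set1.
      - by split => // ps; apply: sp; rewrite ps.
      - move=> s' Ss' [Vs' ns']; exfalso; apply: ns'.
        exact: sepS V UV s' s Ss' Ss Vs' Vs.
    exists V; split => //; first exact: Uo.
    move=> s Ss Vs; apply: contrapT => sp; apply: no; by exists s.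
  exists (~` C); split => //; first exact/closed_openC/closed_closure.
  by move=> s /SC.
have tubeH : forall x : X, \forall i \near x, forall y, S (i, y) -> i = x.
  move=> x; apply: (@tube X Y x (fun i y => S (i, y) -> i = x) cY) => y.
  have [N [oN Np hN]] := nb (x, y).
  apply: (filterS _ (open_nbhs_nbhs (conj oN Np))) => -[i y'] /= Ni Si.
  by have [] := hN _ Si Ni.
have fin : forall x : X, finite_set [set y | S (x, y)].
  move=> x; apply: fiber_finite cY _ => y.
  have [N [oN Np hN]] := nb (x, y).
  by exists N; split => //; exact: open_nbhs_nbhs.
pose D := fst @` S.
have [Dne|D0] := pselect (D !=set0); last first.
  exists (fun _ => set0); split; first by move=> k; split => //; exact: finite_set0.
  move=> z Cz; have [V UV [Vz [s [Vs Ss]]]] := covS z Cz.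
  by exfalso; apply: D0; exists s.1; exists s.
pose U' := [set W : set X | open W /\ exists x, W x /\ forall s, S s -> W s.1 -> s.1 = x].
have U'cov : closure D `<=` \bigcup_(W in U') W.
  move=> x _; have : nbhs x (fun i => forall y, S (i, y) -> i = x) := tubeH x; rewrite nbhsE; move=> -[W [oW Wx] WB].
  exists W => //; split => //; exists x; split => // s Ss Ws.
  by have := WB _ Ws s.2; case: s Ss Ws => a b /= Ss _ /(_ Ss).
have [E [hE hcov]] := sX D Dne (fun _ => U') (fun _ W UO => proj1 UO) (fun _ => U'cov).
have inE : forall s, S s -> exists k, E k s.1.
  move=> s Ss; have [N hN] := hcov s.1 (ex_intro2 _ _ s Ss erefl).
  have [V [oV [x [Vx hV]]] [Vd [e [Ve Ee]]]] := hN N (leqnn N).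
  have dx := hV s Ss Vd.
  have cle := (hE N).2 e Ee.
  have : nbhs e (fun i => forall y, S (i, y) -> i = e) := tubeH e; rewrite nbhsE; move=> -[B [oB Be] Bh].
  have [d' [[s' Ss' <-] [Bd' Vd']]] := cle (B `&` V) (open_nbhs_nbhs (conj (openI oB oV) (conj Be Ve))).
  have d'x := hV s' Ss' Vd'.
  have d'e : s'.1 = e.
    by have := Bh _ Bd' s'.2; case: s' Ss' {Bd' Vd' d'x} => a b /= Ss' /(_ Ss').
  by exists N; rewrite dx -d'x d'e.
exists (fun k => [set s | S s /\ E k s.1]); split.
  move=> k; split; last by move=> s [/SC].
  apply: (@sub_finite_set _ _ (\bigcup_(e in E k) ((fun y => (e, y)) @` [set y | S (e, y)]))).
    move=> [a b] [/= Sab Ea]; exists a => //; exists b => //.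
  apply: bigcup_finite; first exact: (hE k).1.
  by move=> e _; apply: finite_image; exact: fin.
move=> z Cz; have [V UV [Vz [s [Vs Ss]]]] := covS z Cz.
have [k Ek] := inE s Ss.
by exists k; exists V => //; split => //; exists s.
Qed.

Theorem proposition4p6 (X Y : topologicalType) :
  set_strongly_star_hurewicz X ->
  compact [set: Y] ->
  accessible_space (X * Y)%type ->
  card_lt_b [set: (X * Y)%type] ->
  set_strongly_star_hurewicz (X * Y)%type.
Proof.
move=> sX cY T1 cardb A Ane U Uo UC.
have hG0 := fun n => @step1 X Y A (U n) sX cY T1 (Uo n) (UC n).
have [G hG] := choice hG0.
have hk : forall (z : X * Y), exists f : nat -> nat,
    forall n, closure A z -> star (G n (f n)) (U n) z.
  move=> z.
  have hz : forall n, exists k, closure A z -> star (G n k) (U n) z.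
    move=> n; have [Cz|nCz] := pselect (closure A z).
      by have [k hk] := (hG n).2 z Cz; exists k.
    by exists 0%N.
  by have [f hf] := choice hz; exists f.
have [fk hfk] := choice hk.
pose B := fk @` A.
have cle : card_le B [set: (X * Y)%type].
  exact: card_le_trans (card_image_le fk A) (subset_card_le (@subsetT _ A)).
have [g hg] : exists g, forall f, B f -> leq_star f g.
  by apply: contrapT => ub; exact: (cardb B ub cle).
exists (fun n => \bigcup_(j in `I_(g n).+1) G n j); split.
  move=> n; split.
    by apply: bigcup_finite; [exact: finite_II | move=> j _; exact: ((hG n).1 j).1].
  by move=> z [j _ Gz]; exact: ((hG n).1 j).2 _ Gz.
move=> z Az; have [N hN] := hg (fk z) (ex_intro2 _ _ z Az erefl).
exists N => n Nn.
have [V UV [Vz [w [Vw Gw]]]] := hfk z n (subset_closure Az).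
exists V => //; split => //; exists w; split => //.
exists (fk z n) => //=.
by rewrite ltnS; exact: hN n Nn.
Qed.
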